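(* Suppose $m$ satisfies (H1) and one of (H2a), (H2b), (H2c). Then: (i) if (H2a) holds and (Osg) holds, then $\beta\le1$, $\beta_1=0$ and $\beta_2=-1$; (ii) if (H2b) holds, then (Osg) fails; (iii) if (H2c) holds, then (Osg) holds.
   Context: $m:(0,\infty)\to\mathbb{R}$. (H1) (for some $n\in\mathbb{N}^\star$): $m\in C^{n+4}(\mathbb{R}_+)$; $m>0$, $m'\ge0$ on $(0,\infty)$; $\lim_{r\to0^+}rm'(r)$ exists; $|\frac{\mathrm d^k}{\mathrm dr^k}m'(r)|\le Cr^{-k}m'(r)$ for $k=1,\dots,n+3$, $r>0$. (H2a): with $\widetilde m(r)=m(e^r)$, there exist $\beta\in[0,+\infty]$, $\beta_1\in[0,\infty)$, $\beta_2\in(-2,\infty)$ with $\lim_{r\to\infty}m(r)=\infty$, $\lim\frac{r(\log r)\widetilde m'(r)}{\widetilde m(r)}=\beta$, $\lim\frac{r\widetilde m'(r)}{\widetilde m(r)}=\beta_1$, $\lim\frac{r\widetilde m''(r)}{\widetilde m'(r)}=\beta_2$ (limits as $r\to\infty$). (H2b): there is $\alpha\in(0,2)$ with $\lim_{r\to\infty}\frac{rm'(r)}{m(r)}=\alpha$. (H2c): there is $C>0$ with $\lim_{r\to\infty}m(r)=C<\infty$. (Osg): $\int_2^\infty\frac{\mathrm dr}{r(\log r)m(r)}=+\infty$. *)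

(* Defs.v *)
From Stdlib Require Import Reals.
From Coquelicot Require Import Coquelicot.
Open Scope R_scope.

Definition CN_pos (f : R -> R) (N : nat) : Prop :=
  (forall (k : nat) (r : R), (k < N)%nat -> 0 < r -> ex_derive (Derive_n f k) r) /\
  (forall r : R, 0 < r -> continuous (Derive_n f N) r).

Definition H1 (n : nat) (m : R -> R) : Prop :=
  CN_pos m (n + 4) /\
  (forall r, 0 < r -> 0 < m r) /\
  (forall r, 0 < r -> 0 <= Derive m r) /\
  (exists l : R, filterlim (fun r => r * Derive m r) (at_right 0) (locally l)) /\
  (exists C : R, forall (k : nat) (r : R), (1 <= k <= n + 3)%nat -> 0 < r ->
      Rabs (Derive_n (Derive m) k r) <= C * / r ^ k * Derive m r).

Definition mtilde (m : R -> R) : R -> R := fun r => m (exp r).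

Definition H2a (m : R -> R) (beta : Rbar) (beta1 beta2 : R) : Prop :=
  Rbar_le (Finite 0) beta /\ 0 <= beta1 /\ -2 < beta2 /\
  is_lim m p_infty p_infty /\
  is_lim (fun r => r * ln r * Derive (mtilde m) r / mtilde m r) p_infty beta /\
  is_lim (fun r => r * Derive (mtilde m) r / mtilde m r) p_infty (Finite beta1) /\
  is_lim (fun r => r * Derive_n (mtilde m) 2 r / Derive (mtilde m) r) p_infty
    (Finite beta2).

Definition H2b (m : R -> R) (alpha : R) : Prop :=
  0 < alpha < 2 /\
  is_lim (fun r => r * Derive m r / m r) p_infty (Finite alpha).

Definition H2c (m : R -> R) (C : R) : Prop :=
  0 < C /\ is_lim m p_infty (Finite C).

(* (Osg): int_2^oo dr / (r log r m(r)) = +oo, i.e. the partial integrals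
   int_2^T tend to +oo as T -> +oo (the integrand is positive). *)
Definition Osg (m : R -> R) : Prop :=
  is_lim (fun T => RInt (fun r => 1 / (r * ln r * m r)) 2 T) p_infty p_infty.

(* Main.v *)
Require Import Defs.
From Stdlib Require Import Reals Lra Lia Classical.
From Coquelicot Require Import Coquelicot.
Open Scope R_scope.

Lemma mono (f df : R -> R) (S : R) :
 (forall x, S < x -> is_derive f x (df x)) -> (forall x, S < x -> 0 <= df x) ->
 forall x y, S < x -> x <= y -> f x <= f y.
Proof.
 intros Hd Hp x y Hx Hxy. destruct (Req_dec x y) as [->|Hne]; [lra|].
 destruct (MVT_gen f x y df) as [c [Hc Heq]].
 - intros z Hz. apply Hd. rewrite Rmin_left in Hz by lra. lra.
 - intros z Hz. rewrite Rmin_left in Hz by lra. apply (proj2 (continuity_pt_filterlim f z)).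
   assert (Hz' : S < z) by lra.
   exact (ex_derive_continuous f z (ex_intro _ (df z) (Hd z Hz'))).
 - rewrite Rmin_left, Rmax_right in Hc by lra. assert (0 <= df c) by (apply Hp; lra). nra.
Qed.

Lemma lim_fin f l : is_lim f p_infty (Finite l) -> forall eps, 0 < eps -> exists M, forall x, M < x -> Rabs (f x - l) < eps.
Proof. intros H eps He. apply is_lim_spec in H. destruct (H (mkposreal eps He)) as [M HM]. exists M; exact HM. Qed.

Lemma lim_inf f : is_lim f p_infty p_infty -> forall A, exists M, forall x, M < x -> A < f x.
Proof. intros H A. apply is_lim_spec in H. destruct (H A) as [M HM]. exists M; exact HM. Qed.

Lemma lowlog (h psi dpsi : R -> R) a S :
 (forall s, S < s -> 0 < h s) -> (forall s, S < s -> ex_derive h s) ->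
 (forall s, S < s -> is_derive psi s (dpsi s)) ->
 (forall s, S < s -> a * dpsi s <= Derive h s / h s) ->
 forall s0 s, S < s0 -> s0 <= s -> ln (h s0) - a * psi s0 + a * psi s <= ln (h s).
Proof.
 intros Hp Hd Hpsi Hb s0 s H0 H1.
 assert (ln (h s0) - a * psi s0 <= ln (h s) - a * psi s); [|lra].
 apply (mono (fun s => ln (h s) - a * psi s) (fun s => Derive h s / h s - a * dpsi s) S); try lra.
 - intros x Hx. specialize (Hpsi x Hx). auto_derive.
   + repeat split; auto. exists (dpsi x); auto.
   + replace (Derive (fun x0 => psi x0) x) with (dpsi x) by (symmetry; apply is_derive_unique; exact Hpsi).
     change (Derive (fun x0 => h x0) x) with (Derive h x). field. apply Rgt_not_eq, Hp; auto.
 - intros x Hx. specialize (Hb x Hx). lra.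
Qed.

Lemma uplog (h psi dpsi : R -> R) a S :
 (forall s, S < s -> 0 < h s) -> (forall s, S < s -> ex_derive h s) ->
 (forall s, S < s -> is_derive psi s (dpsi s)) ->
 (forall s, S < s -> Derive h s / h s <= a * dpsi s) ->
 forall s0 s, S < s0 -> s0 <= s -> ln (h s) <= ln (h s0) - a * psi s0 + a * psi s.
Proof.
 intros Hp Hd Hpsi Hb s0 s H0 H1.
 assert (a * psi s0 - ln (h s0) <= a * psi s - ln (h s)); [|lra].
 apply (mono (fun s => a * psi s - ln (h s)) (fun s => a * dpsi s - Derive h s / h s) S); try lra.
 - intros x Hx. specialize (Hpsi x Hx). auto_derive.
   + repeat split; auto. exists (dpsi x); auto.
   + replace (Derive (fun x0 => psi x0) x) with (dpsi x) by (symmetry; apply is_derive_unique; exact Hpsi).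
     change (Derive (fun x0 => h x0) x) with (Derive h x). field. apply Rgt_not_eq, Hp; auto.
 - intros x Hx. specialize (Hb x Hx). lra.
Qed.

Lemma integ_cont (m : R -> R) : (forall r, 0<r -> ex_derive m r) -> (forall r, 0<r -> 0 < m r) ->
  forall z, 1 < z -> continuous (fun r => 1/(r*ln r*m r)) z.
Proof.
 intros Hd Hp z Hz.
 enough (HH : ex_derive (fun r => 1/(r*ln r*m r)) z) by exact (ex_derive_continuous _ _ HH).
 assert (0 < ln z) by (rewrite <- ln_1; apply ln_increasing; lra).
 assert (0 < m z) by (apply Hp; lra).
 auto_derive. repeat split; try lra. apply Hd; lra.
 apply Rgt_not_eq. apply Rmult_lt_0_compat; [apply Rmult_lt_0_compat|]; lra.
Qed.

Lemma Phi_der (m : R -> R) : (forall r, 0<r -> ex_derive m r) -> (forall r, 0<r -> 0 < m r) ->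
  forall T, 1 < T -> is_derive (fun T => RInt (fun r => 1/(r*ln r*m r)) 2 T) T (1/(T*ln T*m T)).
Proof.
 intros Hd Hp T HT.
 apply (is_derive_RInt (fun r => 1/(r*ln r*m r)) _ 2 T).
 - assert (He : 0 < T - 1) by lra. exists (mkposreal _ He). intros y Hy.
   apply (@RInt_correct R_CompleteNormedModule). apply (@ex_RInt_continuous R_CompleteNormedModule). intros z Hz.
   apply integ_cont; auto.
   unfold ball in Hy; simpl in Hy; unfold AbsRing_ball, abs, minus, plus, opp in Hy; simpl in Hy.
   apply Rabs_lt_between in Hy.
   destruct Hz as [Hz _]. unfold Rmin in Hz. destruct (Rle_dec 2 y); lra.
 - apply integ_cont; auto.
Qed.
Lemma notOsg (m G dG : R -> R) (R0 : R) : (forall r, 0<r -> ex_derive m r) -> (forall r, 0<r -> 0 < m r) ->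
  2 <= R0 -> (forall x, R0 < x -> is_derive G x (dG x)) ->
  (forall x, R0 < x -> 1/(x*ln x*m x) <= dG x) -> (forall x, R0 < x -> G x <= 0) -> ~ Osg m.
Proof.
 intros Hd Hp HR HG Hle HG0 HO.
 set (Phi := fun T => RInt (fun r => 1/(r*ln r*m r)) 2 T).
 assert (Hmon : forall x y, R0 < x -> x <= y -> G x - Phi x <= G y - Phi y).
 { apply (mono _ (fun x => dG x - 1/(x*ln x*m x)) R0).
   - intros x Hx. apply (is_derive_minus G Phi). auto. apply Phi_der; auto; lra.
   - intros x Hx. specialize (Hle x Hx). lra. }
 destruct (lim_inf _ HO (Phi (R0+1) - G (R0+1))) as [M HM].
 set (T := Rmax M (R0+1) + 1).
 assert (H1 : M < T) by (unfold T; generalize (Rmax_l M (R0+1)); lra).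
 assert (H2 : R0 + 1 < T) by (unfold T; generalize (Rmax_r M (R0+1)); lra).
 specialize (HM T H1). 
 assert (H3 : R0 < R0+1) by lra; assert (H4 : R0+1 <= T) by lra; specialize (Hmon (R0+1) T H3 H4). assert (H5 : R0 < T) by lra; specialize (HG0 T H5).
 change (Phi (R0 + 1) - G (R0 + 1) < Phi T) in HM. lra.
Qed.

Lemma yesOsg (m G dG : R -> R) (R0 : R) : (forall r, 0<r -> ex_derive m r) -> (forall r, 0<r -> 0 < m r) ->
  2 <= R0 -> (forall x, R0 < x -> is_derive G x (dG x)) ->
  (forall x, R0 < x -> dG x <= 1/(x*ln x*m x)) -> is_lim G p_infty p_infty -> Osg m.
Proof.
 intros Hd Hp HR HG Hle HGl.
 set (Phi := fun T => RInt (fun r => 1/(r*ln r*m r)) 2 T).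
 assert (Hmon : forall x y, R0 < x -> x <= y -> Phi x - G x <= Phi y - G y).
 { apply (mono _ (fun x => 1/(x*ln x*m x) - dG x) R0).
   - intros x Hx. apply (is_derive_minus Phi G). apply Phi_der; auto; lra. auto.
   - intros x Hx. specialize (Hle x Hx). lra. }
 unfold Osg. apply is_lim_spec. intros A.
 destruct (lim_inf _ HGl (A - (Phi (R0+1) - G (R0+1)))) as [M HM].
 exists (Rmax M (R0+1)). intros T HT.
 assert (H1 : M < T) by (generalize (Rmax_l M (R0+1)); lra).
 assert (H2 : R0 + 1 < T) by (generalize (Rmax_r M (R0+1)); lra).
 specialize (HM T H1). assert (H3 : R0 < R0+1) by lra; assert (H4 : R0+1 <= T) by lra; specialize (Hmon (R0+1) T H3 H4).
 change (A < Phi T). lra.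
Qed.

Lemma H1_facts n (m : R -> R) : H1 n m ->
  (forall r, 0<r -> ex_derive m r) /\ (forall r, 0<r -> ex_derive (Derive m) r) /\
  (forall r, 0<r -> 0 < m r) /\ (forall r, 0<r -> 0 <= Derive m r) /\
  exists C, forall r, 0<r -> Rabs (Derive (Derive m) r) <= C / r * Derive m r.
Proof.
 intros [[Hk _] [Hp [Hd [_ [C HC]]]]].
 split; [|split; [|split; [|split]]]; auto.
 - intros r Hr. exact (Hk 0%nat r ltac:(lia) Hr).
 - intros r Hr. exact (Hk 1%nat r ltac:(lia) Hr).
 - exists C. intros r Hr. specialize (HC 1%nat r ltac:(lia) Hr). simpl in HC.
   rewrite Rmult_1_r in HC. exact HC.
Qed.

Lemma part3 n (m : R -> R) C : H1 n m -> H2c m C -> Osg m.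
Proof.
 intros HH [HC Hl]. destruct (H1_facts n m HH) as [Hd [_ [Hp _]]].
 destruct (lim_fin _ _ Hl C HC) as [M HM].
 set (R0 := Rmax M 2 + 1).
 assert (HR1 : M < R0) by (unfold R0; generalize (Rmax_l M 2); lra).
 assert (HR2 : 2 < R0) by (unfold R0; generalize (Rmax_r M 2); lra).
 apply (yesOsg m (fun x => ln (ln x) / (2*C)) (fun x => 1/(2*C*x*ln x)) R0 Hd Hp); [lra| | |].
 - intros x Hx. assert (0 < ln x) by (rewrite <- ln_1; apply ln_increasing; lra).
   auto_derive. repeat split; lra. field. repeat split; lra.
 - intros x Hx. assert (0 < ln x) by (rewrite <- ln_1; apply ln_increasing; lra).
   specialize (HM x ltac:(lra)). apply Rabs_lt_between in HM.
   assert (0 < m x) by (apply Hp; lra).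
   unfold Rdiv; rewrite !Rmult_1_l. apply Rinv_le_contravar.
   + apply Rmult_lt_0_compat; [apply Rmult_lt_0_compat|]; lra.
   + assert (0 < x * ln x) by (apply Rmult_lt_0_compat; lra).
     replace (2 * C * x * ln x) with ((x * ln x) * (2 * C)) by ring.
     apply Rmult_le_compat_l; lra.
 - apply is_lim_spec. intros A. exists (exp (exp (2*C*A))). intros x Hx.
   assert (H0 : 0 < x) by (generalize (exp_pos (exp (2*C*A))); lra).
   assert (H1 : exp (2*C*A) < ln x) by (rewrite <- (ln_exp (exp (2*C*A))); apply ln_increasing; auto; apply exp_pos).
   assert (H2 : 2*C*A < ln (ln x)) by (rewrite <- (ln_exp (2*C*A)); apply ln_increasing; auto; apply exp_pos).
   simpl. assert (ln (ln x) / (2*C) - A = (ln (ln x) - 2*C*A) / (2*C)) by (field; lra).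
   assert (0 < (ln (ln x) - 2*C*A) / (2*C)) by (apply Rdiv_lt_0_compat; lra). lra.
Qed.

Lemma exp_le' x y : x <= y -> exp x <= exp y.
Proof. intros [H|H]. left; apply exp_increasing; auto. right; subst; auto. Qed.

Lemma ge_of_ln h c : 0 < h -> c <= ln h -> exp c <= h.
Proof. intros Hh Hc. rewrite <- (exp_ln h) by auto. apply exp_le'; auto. Qed.

Lemma le_of_ln h c : 0 < h -> ln h <= c -> h <= exp c.
Proof. intros Hh Hc. rewrite <- (exp_ln h) by auto. apply exp_le'; auto. Qed.

Lemma inv_cmp A B : 0 < A -> A <= B -> 1/B <= 1/A.
Proof. intros. unfold Rdiv; rewrite !Rmult_1_l. apply Rinv_le_contravar; auto. Qed.

Lemma exp1_ge2 : 2 <= exp 1.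
Proof. generalize (exp_ineq1 1 ltac:(lra)); lra. Qed.

Lemma ln_ge1 x : exp 1 <= x -> 1 <= ln x.
Proof. intros H. rewrite <- (ln_exp 1). destruct H as [H|H]. left; apply ln_increasing; auto. apply exp_pos. right; subst; auto. Qed.

Lemma part2 n (m : R -> R) alpha : H1 n m -> H2b m alpha -> ~ Osg m.
Proof.
 intros HH [Ha Hl]. destruct (H1_facts n m HH) as [Hd [_ [Hp _]]].
 set (a := alpha / 2). assert (Ha0 : 0 < a) by (unfold a; lra).
 destruct (lim_fin _ _ Hl a Ha0) as [M HM].
 set (S := Rmax M (exp 1)).
 assert (HS1 : M <= S) by apply Rmax_l.
 assert (HS2 : exp 1 <= S) by apply Rmax_r.
 generalize exp1_ge2; intro He.
 assert (Hlow : forall s0 s, S < s0 -> s0 <= s -> ln (m s0) - a * ln s0 + a * ln s <= ln (m s)).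
 { apply (lowlog m ln (fun r => / r) a S).
   - intros; apply Hp; lra.
   - intros; apply Hd; lra.
   - intros s Hs. auto_derive; [lra|field; lra].
   - intros s Hs. specialize (HM s ltac:(lra)). apply Rabs_lt_between in HM.
     assert (0 < m s) by (apply Hp; lra).
     assert (a <= s * Derive m s / m s) by (unfold a in *; lra).
     replace (Derive m s / m s) with ((s * Derive m s / m s) / s) by (field; lra).
     unfold Rdiv at 2. apply Rmult_le_compat_r; [|exact H0].
     left; apply Rinv_0_lt_compat; lra. }
 set (c0 := ln (m (S+1)) - a * ln (S+1)).
 apply (notOsg m (fun x => - (exp (-c0) * exp (- (a * ln x))) / a)
          (fun x => exp (-c0) * exp (- (a * ln x)) / x) (S+1) Hd Hp); [lra| | |].
 - intros x Hx. auto_derive; [lra|field; lra].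
 - intros x Hx. specialize (Hlow (S+1) x ltac:(lra) ltac:(lra)). fold c0 in Hlow.
   assert (Hm : exp (c0 + a * ln x) <= m x) by (apply ge_of_ln; [apply Hp; lra|lra]).
   assert (HL : 1 <= ln x) by (apply ln_ge1; lra).
   replace (exp (-c0) * exp (- (a * ln x)) / x) with (1 / (x * exp (c0 + a * ln x))).
   + apply inv_cmp. apply Rmult_lt_0_compat; [lra|apply exp_pos].
     generalize (exp_pos (c0 + a * ln x)); intro.
     assert (0 < x) by lra. assert (0 < m x) by (apply Hp; lra).
     assert (x * exp (c0 + a * ln x) <= x * m x) by (apply Rmult_le_compat_l; lra).
     assert (0 <= (x * m x) * (ln x - 1)) by (apply Rmult_le_pos; nra). nra.
   + rewrite exp_plus, (exp_Ropp c0), (exp_Ropp (a * ln x)). field.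
     repeat split; try lra; apply Rgt_not_eq, exp_pos.
 - intros x Hx. generalize (exp_pos (-c0)) (exp_pos (- (a * ln x))). intros.
   assert (0 < exp (-c0) * exp (- (a * ln x)) / a) by (apply Rdiv_lt_0_compat; nra).
   unfold Rdiv in *. lra.
Qed.

Lemma mt_facts (m : R -> R) : (forall r, 0<r -> ex_derive m r) -> (forall r, 0<r -> 0 < m r) ->
  forall s : R, ex_derive (mtilde m) s /\ Derive (mtilde m) s = Derive m (exp s) * exp s /\ 0 < mtilde m s.
Proof.
 intros Hd Hp s.
 assert (H : is_derive (mtilde m) s (Derive m (exp s) * exp s)).
 { unfold mtilde. auto_derive. apply Hd, exp_pos. change (Derive (fun x => m x) (exp s)) with (Derive m (exp s)). ring. }
 split; [exists (Derive m (exp s) * exp s); exact H|split].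
 - apply is_derive_unique; exact H.
 - apply Hp, exp_pos.
Qed.

Lemma cmp3 x L mx E : 0<x -> 0<L -> 0<E -> E<=mx -> 1/(x*L*mx) <= 1/(x*L*E).
Proof.
 intros. apply inv_cmp. apply Rmult_lt_0_compat; [apply Rmult_lt_0_compat|]; lra.
 apply Rmult_le_compat_l; [|lra]. left; apply Rmult_lt_0_compat; lra.
Qed.

Lemma ln_gt_of_exp x y : exp y < x -> y < ln x.
Proof. intros H. rewrite <- (ln_exp y). apply ln_increasing; auto. apply exp_pos. Qed.

Lemma mt_ln (m : R -> R) x : 0 < x -> mtilde m (ln x) = m x.
Proof. intros. unfold mtilde. rewrite exp_ln; auto. Qed.

Lemma step_b1 n (m : R -> R) beta b1 b2 : H1 n m -> H2a m beta b1 b2 -> Osg m -> b1 = 0.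
Proof.
 intros HH [_ [Hb1 [_ [_ [_ [Hl _]]]]]] HO. destruct (H1_facts n m HH) as [Hd [_ [Hp _]]].
 destruct Hb1 as [Hb1|Hb1]; [exfalso|auto].
 set (a := b1 / 2). assert (Ha0 : 0 < a) by (unfold a; lra).
 destruct (lim_fin _ _ Hl a Ha0) as [M HM].
 set (S := Rmax M 1).
 assert (HS1 : M <= S) by apply Rmax_l.
 assert (HS2 : 1 <= S) by apply Rmax_r.
 assert (Hlow : forall s0 s, S < s0 -> s0 <= s -> ln (mtilde m s0) - a * ln s0 + a * ln s <= ln (mtilde m s)).
 { apply (lowlog (mtilde m) ln (fun r => / r) a S).
   - intros s _; apply (mt_facts m Hd Hp s).
   - intros s _; apply (mt_facts m Hd Hp s).
   - intros s Hs. auto_derive; [lra|field; lra].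
   - intros s Hs. specialize (HM s ltac:(lra)). apply Rabs_lt_between in HM.
     assert (0 < mtilde m s) by apply (mt_facts m Hd Hp s).
     assert (a <= s * Derive (mtilde m) s / mtilde m s) by (unfold a in *; lra).
     replace (Derive (mtilde m) s / mtilde m s) with ((s * Derive (mtilde m) s / mtilde m s) / s) by (field; lra).
     unfold Rdiv at 2. apply Rmult_le_compat_r; [|exact H0].
     left; apply Rinv_0_lt_compat; lra. }
 set (c0 := ln (mtilde m (S+1)) - a * ln (S+1)).
 assert (HR : 2 <= exp (S+1)) by (generalize (exp_ineq1 (S+1) ltac:(lra)); lra).
 revert HO.
 apply (notOsg m (fun x => - (exp (-c0) * exp (- (a * ln (ln x)))) / a)
          (fun x => exp (-c0) * exp (- (a * ln (ln x))) / (x * ln x)) (exp (S+1)) Hd Hp); [lra| | |].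
 - intros x Hx. assert (S+1 < ln x) by (apply ln_gt_of_exp; auto).
   auto_derive; [repeat split; lra|field; lra].
 - intros x Hx. assert (Hlx : S+1 < ln x) by (apply ln_gt_of_exp; auto).
   specialize (Hlow (S+1) (ln x) ltac:(lra) ltac:(lra)). fold c0 in Hlow.
   rewrite mt_ln in Hlow by lra.
   assert (Hm : exp (c0 + a * ln (ln x)) <= m x) by (apply ge_of_ln; [apply Hp; lra|lra]).
   replace (exp (-c0) * exp (- (a * ln (ln x))) / (x * ln x)) with (1 / (x * ln x * exp (c0 + a * ln (ln x)))).
   + apply cmp3; try lra. apply exp_pos.
   + rewrite exp_plus, (exp_Ropp c0), (exp_Ropp (a * ln (ln x))). field.
     repeat split; try lra; apply Rgt_not_eq, exp_pos.
 - intros x Hx. generalize (exp_pos (-c0)) (exp_pos (- (a * ln (ln x)))). intros.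
   assert (0 < exp (-c0) * exp (- (a * ln (ln x))) / a) by (apply Rdiv_lt_0_compat; nra).
   unfold Rdiv in *. lra.
Qed.

Lemma step_beta n (m : R -> R) beta b1 b2 : H1 n m -> H2a m beta b1 b2 -> Osg m -> Rbar_le beta (Finite 1).
Proof.
 intros HH [Hb0 [_ [_ [_ [Hl _]]]]] HO. destruct (H1_facts n m HH) as [Hd [_ [Hp _]]].
 destruct (Rbar_le_lt_dec beta (Finite 1)) as [Hle|Hgt]; [exact Hle|exfalso].
 assert (Hex : exists b M, 1 < b /\ forall s, M < s -> b <= s * ln s * Derive (mtilde m) s / mtilde m s).
 { destruct beta as [bt| |]; simpl in Hgt, Hb0.
   - assert (He : 0 < (bt - 1)/2) by lra.
     destruct (lim_fin _ _ Hl _ He) as [M HM]. exists ((bt+1)/2), M. split; [lra|].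
     intros s Hs. specialize (HM s Hs). apply Rabs_lt_between in HM. lra.
   - destruct (lim_inf _ Hl 2) as [M HM]. exists 2, M. split; [lra|].
     intros s Hs. specialize (HM s Hs). lra.
   - contradiction. }
 clear Hl. destruct Hex as [b [M [Hb HM]]].
 set (S := Rmax M (exp 1)).
 assert (HS1 : M <= S) by apply Rmax_l.
 assert (HS2 : exp 1 <= S) by apply Rmax_r.
 generalize exp1_ge2; intro He.
 assert (Hlow : forall s0 s, S < s0 -> s0 <= s -> ln (mtilde m s0) - b * ln (ln s0) + b * ln (ln s) <= ln (mtilde m s)).
 { apply (lowlog (mtilde m) (fun s => ln (ln s)) (fun r => / (r * ln r)) b S).
   - intros s _; apply (mt_facts m Hd Hp s).
   - intros s _; apply (mt_facts m Hd Hp s).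
   - intros s Hs. assert (1 <= ln s) by (apply ln_ge1; lra).
     auto_derive; [repeat split; lra|field; lra].
   - intros s Hs. specialize (HM s ltac:(lra)).
     assert (1 <= ln s) by (apply ln_ge1; lra).
     assert (0 < mtilde m s) by apply (mt_facts m Hd Hp s).
     assert (Hsl : 0 < s * ln s) by (apply Rmult_lt_0_compat; lra).
     replace (Derive (mtilde m) s / mtilde m s) with ((s * ln s * Derive (mtilde m) s / mtilde m s) * / (s * ln s)) by (field; lra).
     apply Rmult_le_compat_r; [|exact HM].
     left; apply Rinv_0_lt_compat; lra. }
 set (c0 := ln (mtilde m (S+1)) - b * ln (ln (S+1))).
 assert (HR : 2 <= exp (S+1)) by (generalize (exp_ineq1 (S+1) ltac:(lra)); lra).
 revert HO.
 apply (notOsg m (fun x => - (exp (-c0) * exp ((1 - b) * ln (ln (ln x)))) / (b - 1))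
          (fun x => exp (-c0) * exp (- (b * ln (ln (ln x)))) / (x * ln x)) (exp (S+1)) Hd Hp); [lra| | |].
 - intros x Hx. assert (Hlx : S+1 < ln x) by (apply ln_gt_of_exp; auto).
   assert (Hll : 1 <= ln (ln x)) by (apply ln_ge1; lra).
   auto_derive; [repeat split; lra|].
   replace (exp ((1 - b) * ln (ln (ln x)))) with (exp (ln (ln (ln x))) * exp (- (b * ln (ln (ln x))))) by (rewrite <- exp_plus; f_equal; ring).
   rewrite exp_ln by lra. field. lra.
 - intros x Hx. assert (Hlx : S+1 < ln x) by (apply ln_gt_of_exp; auto).
   assert (Hll : 1 <= ln (ln x)) by (apply ln_ge1; lra).
   specialize (Hlow (S+1) (ln x) ltac:(lra) ltac:(lra)). fold c0 in Hlow.
   rewrite mt_ln in Hlow by lra.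
   assert (Hm : exp (c0 + b * ln (ln (ln x))) <= m x) by (apply ge_of_ln; [apply Hp; lra|lra]).
   replace (exp (-c0) * exp (- (b * ln (ln (ln x)))) / (x * ln x)) with (1 / (x * ln x * exp (c0 + b * ln (ln (ln x))))).
   + apply cmp3; try lra. apply exp_pos.
   + rewrite exp_plus, (exp_Ropp c0), (exp_Ropp (b * ln (ln (ln x)))). field.
     repeat split; try lra; apply Rgt_not_eq, exp_pos.
 - intros x Hx. generalize (exp_pos (-c0)) (exp_pos ((1 - b) * ln (ln (ln x)))). intros.
   assert (0 < exp (-c0) * exp ((1 - b) * ln (ln (ln x))) / (b - 1)) by (apply Rdiv_lt_0_compat; nra).
   unfold Rdiv in *. lra.
Qed.

Lemma gronwall n (m : R -> R) : H1 n m -> is_lim m p_infty p_infty ->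
  exists r0, 0 < r0 /\ forall r, r0 <= r -> 0 < Derive m r.
Proof.
 intros HH Hl. destruct (H1_facts n m HH) as [Hd [Hd2 [Hp [Hm' [C HC]]]]].
 assert (Hex : exists r0, 0 < r0 /\ 0 < Derive m r0).
 { apply NNPP. intros Hno.
   assert (Hz : forall r, 0 < r -> Derive m r <= 0).
   { intros r Hr. apply Rnot_lt_le. intros Hc. apply Hno. exists r; auto. }
   assert (Hmon : forall x y, 0 < x -> x <= y -> - m x <= - m y).
   { apply (mono (fun x => - m x) (fun x => - Derive m x) 0).
     - intros x Hx. apply (is_derive_opp m). apply Derive_correct, Hd; auto.
     - intros x Hx. specialize (Hz x Hx). lra. }
   destruct (lim_inf _ Hl (m 1)) as [M HM].
   set (r := Rmax M 1 + 1).
   assert (M < r) by (unfold r; generalize (Rmax_l M 1); lra).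
   assert (1 <= r) by (unfold r; generalize (Rmax_r M 1); lra).
   specialize (HM r ltac:(lra)). specialize (Hmon 1 r ltac:(lra) ltac:(lra)). lra. }
 destruct Hex as [r0 [Hr0 Hpos]]. exists r0. split; auto.
 set (C' := Rabs C).
 assert (Hmon : forall x y, 0 < x -> x <= y -> Derive m x * exp (C' * ln x) <= Derive m y * exp (C' * ln y)).
 { apply (mono (fun x => Derive m x * exp (C' * ln x))
     (fun x => (Derive (Derive m) x + C' / x * Derive m x) * exp (C' * ln x)) 0).
   - intros x Hx. specialize (Hd2 x Hx). auto_derive.
     + repeat split; auto.
     + change (Derive (fun x0 => Derive m x0) x) with (Derive (Derive m) x). field. lra.
   - intros x Hx. apply Rmult_le_pos; [|left; apply exp_pos].
     specialize (HC x Hx). specialize (Hm' x Hx).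
     assert (Hcc : C / x * Derive m x <= C' / x * Derive m x).
     { apply Rmult_le_compat_r; auto. unfold Rdiv. apply Rmult_le_compat_r.
       left; apply Rinv_0_lt_compat; auto. apply Rle_abs. }
     assert (- Rabs (Derive (Derive m) x) <= Derive (Derive m) x) by (generalize (Rle_abs (- Derive (Derive m) x)); rewrite Rabs_Ropp; lra).
     lra. }
 intros r Hr. specialize (Hmon r0 r Hr0 Hr).
 assert (0 < Derive m r0 * exp (C' * ln r0)) by (apply Rmult_lt_0_compat; auto; apply exp_pos).
 generalize (exp_pos (C' * ln r)); intro.
 destruct (Rlt_le_dec 0 (Derive m r)) as [h|h]; auto.
 assert (Derive m r * exp (C' * ln r) <= 0) by nra. lra.
Qed.

Lemma step_b2 n (m : R -> R) beta b1 b2 : H1 n m -> H2a m beta b1 b2 -> b1 = 0 -> b2 = -1.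
Proof.
 intros HH [_ [_ [_ [Hinf [_ [Hl1 Hl2]]]]]] Hb1. subst b1.
 destruct (H1_facts n m HH) as [Hd [Hd2 [Hp _]]].
 destruct (gronwall n m HH Hinf) as [r0 [Hr0 Hg0]].
 set (g := Derive (mtilde m)).
 assert (Hgeq : forall s, g s = Derive m (exp s) * exp s) by (intros s; apply (mt_facts m Hd Hp s)).
 assert (Hgd : forall s, ex_derive g s).
 { intros s. apply (ex_derive_ext (fun s => Derive m (exp s) * exp s)).
   intros t; rewrite Hgeq; auto. auto_derive. apply Hd2, exp_pos. }
 assert (Hgp : forall s, ln r0 < s -> 0 < g s).
 { intros s Hs. rewrite Hgeq. apply Rmult_lt_0_compat; [|apply exp_pos].
   apply Hg0. rewrite <- (exp_ln r0) by auto. left; apply exp_increasing; auto. }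
 assert (Hmt : forall s, ex_derive (mtilde m) s /\ 0 < mtilde m s) by (intros s; split; apply (mt_facts m Hd Hp s)).
 change (is_lim (fun r => r * Derive g r / g r) p_infty b2) in Hl2.
 change (is_lim (fun r => r * g r / mtilde m r) p_infty 0) in Hl1.
 destruct (Rtotal_order b2 (-1)) as [Hlt|[Heq|Hgt]]; [exfalso| exact Heq |exfalso].
 -
   set (d := (-1 - b2)/2). assert (Hd0 : 0 < d) by (unfold d; lra).
   destruct (lim_fin _ _ Hl2 d Hd0) as [M HM].
   set (S := Rmax (Rmax M (ln r0)) 1).
   assert (HS1 : M <= S) by (unfold S; generalize (Rmax_l M (ln r0)) (Rmax_l (Rmax M (ln r0)) 1); lra).
   assert (HS2 : ln r0 <= S) by (unfold S; generalize (Rmax_r M (ln r0)) (Rmax_l (Rmax M (ln r0)) 1); lra).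
   assert (HS3 : 1 <= S) by (unfold S; apply Rmax_r).
   assert (Hup : forall s0 s, S < s0 -> s0 <= s -> ln (g s) <= ln (g s0) - (-(1+d)) * ln s0 + (-(1+d)) * ln s).
   { apply (uplog g ln (fun r => / r) (-(1+d)) S).
     - intros s Hs; apply Hgp; lra.
     - intros s _; apply Hgd.
     - intros s Hs. auto_derive; [lra|field; lra].
     - intros s Hs. specialize (HM s ltac:(lra)). apply Rabs_lt_between in HM.
       assert (0 < g s) by (apply Hgp; lra).
       replace (Derive g s / g s) with ((s * Derive g s / g s) * / s) by (field; lra).
       replace (- (1 + d) * / s) with ((- (1 + d)) * / s) by ring.
       apply Rmult_le_compat_r; [left; apply Rinv_0_lt_compat; lra|unfold d in *; lra]. }
   set (s0 := S + 1).
   set (c := ln (g s0) + (1+d) * ln s0).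
   set (K := exp c).
   assert (Hmon : forall x y, s0 < x -> x <= y -> - (mtilde m x + K * exp (- (d * ln x)) / d) <= - (mtilde m y + K * exp (- (d * ln y)) / d)).
   { apply (mono _ (fun x => - g x + K * exp (- (d * ln x)) / x) s0).
     - intros x Hx. destruct (Hmt x) as [Hmx _]. auto_derive.
       + repeat split; auto; unfold s0 in Hx; lra.
       + change (Derive (fun x0 => mtilde m x0) x) with (g x). field. split; unfold s0 in Hx; lra.
     - intros x Hx. specialize (Hup s0 x ltac:(unfold s0; lra) ltac:(lra)).
       assert (Hgx : 0 < g x) by (apply Hgp; unfold s0 in Hx; lra).
       assert (g x <= exp (c - (1+d) * ln x)) by (apply le_of_ln; auto; unfold c; lra).
       replace (exp (c - (1+d) * ln x)) with (K * exp (- (d * ln x)) / x) in H.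
       lra.
       unfold K. replace (c - (1+d) * ln x) with (c + (- (d * ln x)) + (- ln x)) by ring.
       rewrite !exp_plus, exp_Ropp with (x := ln x), exp_ln by (unfold s0 in Hx; lra). field. unfold s0 in Hx; lra. }
   set (B := mtilde m (s0+1) + K * exp (- (d * ln (s0+1))) / d).
   destruct (lim_inf _ Hinf B) as [M' HM'].
   set (r := Rmax M' (exp (s0+1)) + 1).
   assert (Hr1 : M' < r) by (unfold r; generalize (Rmax_l M' (exp (s0+1))); lra).
   assert (Hr2 : exp (s0+1) < r) by (unfold r; generalize (Rmax_r M' (exp (s0+1))); lra).
   assert (Hlr : s0 + 1 < ln r) by (apply ln_gt_of_exp; auto).
   assert (Hr0' : 0 < r) by (generalize (exp_pos (s0+1)); lra).
   specialize (HM' r Hr1). specialize (Hmon (s0+1) (ln r) ltac:(lra) ltac:(lra)).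
   rewrite mt_ln in Hmon by auto.
   generalize (exp_pos (- (d * ln (ln r)))); intro.
   assert (0 < K) by apply exp_pos.
   assert (0 < K * exp (- (d * ln (ln r))) / d) by (apply Rdiv_lt_0_compat; nra).
   unfold B in HM'. lra.
 -
   set (d := (b2 + 1)/3). assert (Hd0 : 0 < d) by (unfold d; lra).
   destruct (lim_fin _ _ Hl2 d Hd0) as [M2 HM2].
   destruct (lim_fin _ _ Hl1 d Hd0) as [M1 HM1].
   set (S := Rmax (Rmax M1 M2) (Rmax (ln r0) 1)).
   assert (HS1 : M1 <= S) by (unfold S; generalize (Rmax_l M1 M2) (Rmax_l (Rmax M1 M2) (Rmax (ln r0) 1)); lra).
   assert (HS1' : M2 <= S) by (unfold S; generalize (Rmax_r M1 M2) (Rmax_l (Rmax M1 M2) (Rmax (ln r0) 1)); lra).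
   assert (HS2 : ln r0 <= S) by (unfold S; generalize (Rmax_l (ln r0) 1) (Rmax_r (Rmax M1 M2) (Rmax (ln r0) 1)); lra).
   assert (HS3 : 1 <= S) by (unfold S; generalize (Rmax_r (ln r0) 1) (Rmax_r (Rmax M1 M2) (Rmax (ln r0) 1)); lra).
   set (phi := fun s => s * g s / mtilde m s).
   assert (Hphid : forall s, S < s -> is_derive phi s ((g s + s * Derive g s) / mtilde m s - s * g s * g s / (mtilde m s * mtilde m s))).
   { intros s Hs. destruct (Hmt s) as [Hmx Hmp]. unfold phi. auto_derive.
     + repeat split; auto. lra.
     + change (Derive (fun x0 => mtilde m x0) s) with (g s).
       change (Derive (fun x0 => g x0) s) with (Derive g s). field. lra. }
   assert (Hlow : forall s0 s, S < s0 -> s0 <= s -> ln (phi s0) - d * ln s0 + d * ln s <= ln (phi s)).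
   { apply (lowlog phi ln (fun r => / r) d S).
     - intros s Hs. unfold phi. destruct (Hmt s) as [_ Hmp].
       apply Rdiv_lt_0_compat; auto. apply Rmult_lt_0_compat; [lra|apply Hgp; lra].
     - intros s Hs. eexists; apply Hphid; auto.
     - intros s Hs. auto_derive; [lra|field; lra].
     - intros s Hs. rewrite (is_derive_unique _ _ _ (Hphid s Hs)).
       specialize (HM2 s ltac:(lra)). apply Rabs_lt_between in HM2.
       specialize (HM1 s ltac:(lra)). apply Rabs_lt_between in HM1.
       destruct (Hmt s) as [_ Hmp]. assert (0 < g s) by (apply Hgp; lra).
       replace (((g s + s * Derive g s) / mtilde m s - s * g s * g s / (mtilde m s * mtilde m s)) / phi s)
         with ((1 + s * Derive g s / g s - s * g s / mtilde m s) * / s).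
       + apply Rmult_le_compat_r; [left; apply Rinv_0_lt_compat; lra|unfold d in *; lra].
       + unfold phi. field. repeat split; lra. }
   set (c := ln (phi (S+1)) - d * ln (S+1)).
   set (X := Rmax (ln (S+1)) ((ln d - c) / d) + 1).
   set (s := exp X).
   assert (HX1 : ln (S+1) < X) by (unfold X; generalize (Rmax_l (ln (S+1)) ((ln d - c) / d)); lra).
   assert (HX2 : (ln d - c) / d < X) by (unfold X; generalize (Rmax_r (ln (S+1)) ((ln d - c) / d)); lra).
   assert (Hs1 : S + 1 < s) by (unfold s; rewrite <- (exp_ln (S+1)) by lra; apply exp_increasing; auto).
   specialize (Hlow (S+1) s ltac:(lra) ltac:(lra)). fold c in Hlow.
   assert (Hls : ln s = X) by (unfold s; apply ln_exp). rewrite Hls in Hlow.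
   assert (Hc : ln d < c + d * X).
   { assert (ln d = c + d * ((ln d - c) / d)) by (field; lra).
     assert (d * ((ln d - c) / d) < d * X) by (apply Rmult_lt_compat_l; auto). lra. }
   specialize (HM1 s ltac:(lra)). apply Rabs_lt_between in HM1.
   assert (Hphp : 0 < phi s).
   { unfold phi. destruct (Hmt s) as [_ Hmp].
     apply Rdiv_lt_0_compat; auto. apply Rmult_lt_0_compat; [lra|apply Hgp; lra]. }
   assert (ln (phi s) < ln d) by (apply ln_increasing; auto; unfold phi; lra).
   lra.
Qed.

Theorem lemma2p1 (n : nat) (m : R -> R) :
  (1 <= n)%nat ->
  H1 n m ->
  ((exists beta beta1 beta2, H2a m beta beta1 beta2) \/
   (exists alpha, H2b m alpha) \/
   (exists C, H2c m C)) ->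
  (forall beta beta1 beta2, H2a m beta beta1 beta2 -> Osg m ->
     Rbar_le beta (Finite 1) /\ beta1 = 0 /\ beta2 = -1) /\
  (forall alpha, H2b m alpha -> ~ Osg m) /\
  (forall C, H2c m C -> Osg m).
Proof.
 intros _ HH _. split; [|split].
 - intros beta b1 b2 Ha HO.
   assert (Hb1 : b1 = 0) by exact (step_b1 n m beta b1 b2 HH Ha HO).
   split; [exact (step_beta n m beta b1 b2 HH Ha HO)|split; auto].
   exact (step_b2 n m beta b1 b2 HH Ha Hb1).
 - intros alpha Hb. exact (part2 n m alpha HH Hb).
 - intros C Hc. exact (part3 n m C HH Hc).
Qed.
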